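(* Let $X,Y$ take values in $\mathbb Z_d$, let $P_Y$ be a probability distribution on $\mathbb Z_d$, $\{\sigma_z\}_{z\in\mathbb Z_d}$ density operators on $\mathcal H_B$, and consider $\psi_{XYB}=\frac1d\sum_{x,z}P_Y(z)|x\rangle\langle x|_X\otimes|x+z\rangle\langle x+z|_Y\otimes(\sigma_z)_B$ and $\rho_{YB}=\sum_yP_Y(y)|y\rangle\langle y|_Y\otimes(\sigma_y)_B$. Then for any conditional entropy $\mathsf H$ of the form $\mathsf H_\downarrow$ or $\mathsf H_\uparrow$ below, $\mathsf H(X|YB)_\psi=\mathsf H(Y|B)_\rho$ and $\mathsf H^\perp(X|YB)_\psi=\mathsf H^\perp(Y|B)_\rho$.
   Context: Finite-dimensional spaces. A divergence $\mathsf D(\rho,\sigma)$ is any function satisfying data processing under quantum channels, $\mathsf D(\rho,c\sigma)=\mathsf D(\rho,\sigma)-\log c$ ($c>0$), dominance ($\sigma'\ge\sigma\Rightarrow\mathsf D(\rho,\sigma')\le\mathsf D(\rho,\sigma)$), and $\mathsf D(\rho,\rho)=0$. $\mathsf H_\downarrow(A|B)_\rho=-\mathsf D(\rho_{AB},\mathbb I_A\otimes\rho_B)$, $\mathsf H_\uparrow(A|B)_\rho=\max_{\sigma_B}[-\mathsf D(\rho_{AB},\mathbb I_A\otimes\sigma_B)]$ over density operators. Dual entropy: $\mathsf H^\perp(A|B)_\rho=-\mathsf H(A|C)_\rho$ where $\rho_{ABC}$ is a purification of $\rho_{AB}$. *)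

(* Defs.v *)
From HB Require Import structures.
From mathcomp Require Import all_boot all_order all_algebra.
Set Implicit Arguments. Unset Strict Implicit. Unset Printing Implicit Defensive.
Import Order.TTheory GRing.Theory Num.Theory.
Local Open Scope ring_scope.

Section QDefs.
Variable C : numClosedFieldType.

Definition adj m n (A : 'M[C]_(m, n)) : 'M[C]_(n, m) := (map_mx Num.conj A)^T.

Definition psd n (A : 'M[C]_n) : Prop :=
  forall v : 'cV[C]_n, 0 <= (adj v *m A *m v) 0 0.

Definition loewner_le n (A B : 'M[C]_n) : Prop := psd (B - A).

Definition density n (rho : 'M[C]_n) : Prop := psd rho /\ \tr rho = 1.

(* splitting an index of a tensor product space H_m (x) H_n *)
Definition unpair m n (k : 'I_(m * n)) : 'I_m * 'I_n :=
  enum_val (cast_ord (esym (mxvec_cast m n)) k).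

(* Kronecker (tensor) product, basis |i>|j> indexed by mxvec_index i j *)
Definition kron m1 n1 m2 n2 (A : 'M[C]_(m1, n1)) (B : 'M[C]_(m2, n2))
  : 'M[C]_(m1 * m2, n1 * n2) :=
  \matrix_(k, l) (A (unpair k).1 (unpair l).1 * B (unpair k).2 (unpair l).2).

Definition ptrace2 m n (A : 'M[C]_(m * n)) : 'M[C]_m :=
  \matrix_(i, j) \sum_(t < n) A (mxvec_index i t) (mxvec_index j t).
Definition ptrace1 m n (A : 'M[C]_(m * n)) : 'M[C]_n :=
  \matrix_(i, j) \sum_(s < m) A (mxvec_index s i) (mxvec_index s j).
(* trace out the middle factor of H_a (x) H_m (x) H_c, giving a state on H_a (x) H_c *)
Definition ptrace_mid a m c (A : 'M[C]_((a * m) * c)) : 'M[C]_(a * c) :=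
  \matrix_(k, l) \sum_(t < m)
     A (mxvec_index (mxvec_index (unpair k).1 t) (unpair k).2)
       (mxvec_index (mxvec_index (unpair l).1 t) (unpair l).2).

(* quantum channel H_n -> H_m, given by Kraus operators K with sum K^dag K = 1 *)
Definition kraus_channel n m (Ks : seq 'M[C]_(m, n)) : Prop :=
  \sum_(K <- Ks) (adj K *m K) = 1%:M.
Definition apply_channel n m (Ks : seq 'M[C]_(m, n)) (X : 'M[C]_n) : 'M[C]_m :=
  \sum_(K <- Ks) (K *m X *m adj K).

Inductive ext : Type := EFin of C | EPInf | ENInf.

Definition ext_le (x y : ext) : Prop :=
  match x, y with
  | ENInf, _ => True
  | _, EPInf => True
  | EFin a, EFin b => a <= b
  | _, _ => False
  end.

Definition ext_opp (x : ext) : ext :=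
  match x with EFin a => EFin (- a) | EPInf => ENInf | ENInf => EPInf end.

Definition ext_subC (x : ext) (c : C) : ext :=
  match x with EFin a => EFin (a - c) | e => e end.

Definition ext_real (x : ext) : Prop :=
  match x with EFin a => a \is Num.real | _ => True end.

Definition is_log (log : C -> C) : Prop :=
  (forall x, 0 < x -> log x \is Num.real) /\
  (forall x y, 0 < x -> 0 < y -> log (x * y) = log x + log y).

Definition divergence_family := forall n : nat, 'M[C]_n -> 'M[C]_n -> ext.

Definition divergence (log : C -> C) (D : divergence_family) : Prop :=
  (forall n (rho sigma : 'M[C]_n), ext_real (D n rho sigma)) /\
  (forall n m (Ks : seq 'M[C]_(m, n)) (rho sigma : 'M[C]_n),
      kraus_channel Ks -> density rho -> psd sigma ->
      ext_le (D m (apply_channel Ks rho) (apply_channel Ks sigma)) (D n rho sigma)) /\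
  (forall n (rho sigma : 'M[C]_n) (c : C),
      density rho -> psd sigma -> 0 < c ->
      D n rho (c *: sigma) = ext_subC (D n rho sigma) (log c)) /\
  (forall n (rho sigma sigma' : 'M[C]_n),
      density rho -> psd sigma -> loewner_le sigma sigma' ->
      ext_le (D n rho sigma') (D n rho sigma)) /\
  (forall n (rho : 'M[C]_n), density rho -> D n rho rho = EFin 0).

Definition Hdown (D : divergence_family) a b (rho : 'M[C]_(a * b)) : ext :=
  ext_opp (D (a * b)%N rho (kron (1%:M : 'M[C]_a) (ptrace1 rho))).

(* h is an upper bound of { - D(rho_AB, I_A (x) sigma_B) : sigma_B density };
   H_up(A|B)_rho is the supremum (maximum) of this set, and two such suprema are
   equal iff the two sets have the same upper bounds. *)
Definition Hup_ub (D : divergence_family) a b (rho : 'M[C]_(a * b)) (h : ext) : Prop :=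
  forall sigma : 'M[C]_b, density sigma ->
    ext_le (ext_opp (D (a * b)%N rho (kron (1%:M : 'M[C]_a) sigma))) h.

Definition proj n (x : 'I_n) : 'M[C]_n := delta_mx x x.

(* a (not necessarily normalized) pure operator |v><v| on H_a (x) H_m (x) H_c; it is a
   purification of rho_{A M} (on H_a (x) H_m) iff ptrace2 (pure v) = rho *)
Definition pure n (v : 'cV[C]_n) : 'M[C]_n := v *m adj v.

End QDefs.
Arguments proj {C n} x.

(* Main.v *)
Require Import Defs.
From HB Require Import structures.
From mathcomp Require Import all_boot all_order all_algebra.
From mathcomp Require Import ring.
Set Implicit Arguments. Unset Strict Implicit. Unset Printing Implicit Defensive.
Import Order.TTheory GRing.Theory Num.Theory.
Local Open Scope ring_scope.


Section Basics.
Variable C : numClosedFieldType.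

Lemma unpairK m n (i : 'I_m) (j : 'I_n) : unpair (mxvec_index i j) = (i, j).
Proof. by rewrite /unpair /mxvec_index cast_ordK enum_rankK. Qed.

Lemma mxvec_index_eq m n (i i' : 'I_m) (j j' : 'I_n) :
  (mxvec_index i j == mxvec_index i' j') = (i == i') && (j == j').
Proof.
apply/eqP/andP => [E|[/eqP-> /eqP->]] //.
by have := congr1 (@unpair m n) E; rewrite !unpairK => -[-> ->].
Qed.

Lemma big_pair m n (F : 'I_(m * n) -> C) :
  \sum_k F k = \sum_i \sum_j F (mxvec_index i j).
Proof.
rewrite pair_big /=.
rewrite (reindex (fun p : 'I_m * 'I_n => mxvec_index p.1 p.2)) //=.
exists (@unpair m n) => [[i j] _ | k _] /=; first by rewrite unpairK.
by case/mxvec_indexP: k => i j; rewrite unpairK.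
Qed.

Lemma kronE m1 n1 m2 n2 (A : 'M[C]_(m1, n1)) (B : 'M[C]_(m2, n2)) i j i' j' :
  kron A B (mxvec_index i j) (mxvec_index i' j') = A i i' * B j j'.
Proof. by rewrite mxE !unpairK. Qed.

Lemma adjE m n (A : 'M[C]_(m, n)) i j : adj A i j = (A j i)^*.
Proof. by rewrite !mxE. Qed.

Lemma adj_mul m n p (A : 'M[C]_(m, n)) (B : 'M[C]_(n, p)) :
  adj (A *m B) = adj B *m adj A.
Proof. by rewrite /adj map_mxM trmx_mul. Qed.

Lemma adjK m n (A : 'M[C]_(m, n)) : adj (adj A) = A.
Proof. by apply/matrixP => i j; rewrite !adjE conjCK. Qed.

Lemma adj_one n : adj (1%:M : 'M[C]_n) = 1%:M.
Proof. by rewrite /adj map_mx1 trmx1. Qed.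

Lemma adjD m n (A B : 'M[C]_(m, n)) : adj (A + B) = adj A + adj B.
Proof. by apply/matrixP => i j; rewrite !mxE rmorphD. Qed.

Lemma adjN m n (A : 'M[C]_(m, n)) : adj (- A) = - adj A.
Proof. by apply/matrixP => i j; rewrite !mxE rmorphN. Qed.

Lemma adjB m n (A B : 'M[C]_(m, n)) : adj (A - B) = adj A - adj B.
Proof. by rewrite adjD adjN. Qed.

Lemma adjZ m n c (A : 'M[C]_(m, n)) : adj (c *: A) = c^* *: adj A.
Proof. by apply/matrixP => i j; rewrite !mxE rmorphM. Qed.

Lemma adj_sum m n I (r : seq I) (P : pred I) (F : I -> 'M[C]_(m, n)) :
  adj (\sum_(i <- r | P i) F i) = \sum_(i <- r | P i) adj (F i).
Proof.
apply/matrixP => i j; rewrite adjE !summxE rmorph_sum.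
by apply: eq_bigr => k _; rewrite adjE.
Qed.

Lemma adj_tr m n (A : 'M[C]_(m, n)) : adj (A^T) = (adj A)^T.
Proof. by apply/matrixP => i j; rewrite !mxE. Qed.

Lemma kron_mul m1 n1 p1 m2 n2 p2 (A : 'M[C]_(m1, n1)) (B : 'M[C]_(m2, n2))
  (A' : 'M[C]_(n1, p1)) (B' : 'M[C]_(n2, p2)) :
  kron A B *m kron A' B' = kron (A *m A') (B *m B').
Proof.
apply/matrixP => k l; case/mxvec_indexP: k => i j; case/mxvec_indexP: l => i' j'.
rewrite kronE !mxE big_pair big_distrl; apply: eq_bigr => a _.
rewrite big_distrr; apply: eq_bigr => b _ /=.
by rewrite !kronE mulrACA.
Qed.

Lemma adj_kron m1 n1 m2 n2 (A : 'M[C]_(m1, n1)) (B : 'M[C]_(m2, n2)) :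
  adj (kron A B) = kron (adj A) (adj B).
Proof.
apply/matrixP => k l; case/mxvec_indexP: k => i j; case/mxvec_indexP: l => i' j'.
by rewrite adjE !kronE !adjE rmorphM.
Qed.

Lemma kron11 m n : kron (1%:M : 'M[C]_m) (1%:M : 'M[C]_n) = 1%:M.
Proof.
apply/matrixP => k l; case/mxvec_indexP: k => i j; case/mxvec_indexP: l => i' j'.
by rewrite kronE !mxE mxvec_index_eq; case: (i == i'); case: (j == j'); rewrite ?mulr1 ?mulr0 ?mul0r.
Qed.

Lemma kron_sumr m1 n1 m2 n2 I (r : seq I) (P : pred I) (A : 'M[C]_(m1, n1))
   (F : I -> 'M[C]_(m2, n2)) :
  kron A (\sum_(i <- r | P i) F i) = \sum_(i <- r | P i) kron A (F i).
Proof.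
apply/matrixP => k l; case/mxvec_indexP: k => i j; case/mxvec_indexP: l => i' j'.
rewrite kronE !summxE big_distrr; apply: eq_bigr => x _.
by rewrite kronE.
Qed.

Lemma kron_suml m1 n1 m2 n2 I (r : seq I) (P : pred I) (B : 'M[C]_(m2, n2))
   (F : I -> 'M[C]_(m1, n1)) :
  kron (\sum_(i <- r | P i) F i) B = \sum_(i <- r | P i) kron (F i) B.
Proof.
apply/matrixP => k l; case/mxvec_indexP: k => i j; case/mxvec_indexP: l => i' j'.
rewrite kronE !summxE big_distrl; apply: eq_bigr => x _.
by rewrite kronE.
Qed.

Lemma kronZl m1 n1 m2 n2 c (A : 'M[C]_(m1, n1)) (B : 'M[C]_(m2, n2)) :
  kron (c *: A) B = c *: kron A B.
Proof.
apply/matrixP => k l; case/mxvec_indexP: k => i j; case/mxvec_indexP: l => i' j'.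
by rewrite [LHS]kronE [RHS]mxE kronE mxE mulrA.
Qed.

Lemma kronZr m1 n1 m2 n2 c (A : 'M[C]_(m1, n1)) (B : 'M[C]_(m2, n2)) :
  kron A (c *: B) = c *: kron A B.
Proof.
apply/matrixP => k l; case/mxvec_indexP: k => i j; case/mxvec_indexP: l => i' j'.
by rewrite [LHS]kronE [RHS]mxE kronE mxE mulrCA.
Qed.

Lemma sum_delta n (a0 : 'I_n) (f : 'I_n -> C) :
  \sum_a ((a == a0)%:R * f a) = f a0.
Proof.
rewrite (bigD1 a0) //= eqxx mul1r big1 ?addr0 // => a /negbTE ->.
by rewrite mul0r.
Qed.

Lemma sum_delta' n (a0 : 'I_n) (f : 'I_n -> C) :
  \sum_a ((a0 == a)%:R * f a) = f a0.
Proof. by rewrite -[RHS](sum_delta a0); apply: eq_bigr => a _; rewrite eq_sym. Qed.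

Lemma psd_sum n I (r : seq I) (P : pred I) (F : I -> 'M[C]_n) :
  (forall i, P i -> psd (F i)) -> psd (\sum_(i <- r | P i) F i).
Proof.
move=> H v; rewrite mulmx_sumr mulmx_suml summxE.
by apply: sumr_ge0 => i Pi; apply: H.
Qed.


Lemma psd_scale n c (A : 'M[C]_n) : 0 <= c -> psd A -> psd (c *: A).
Proof.
by move=> c0 PA v; rewrite -scalemxAr -scalemxAl mxE mulr_ge0.
Qed.

Lemma psd_conj m n (K : 'M[C]_(m, n)) X : psd X -> psd (K *m X *m adj K).
Proof.
move=> PX v; have := PX (adj K *m v).
by rewrite adj_mul adjK !mulmxA.
Qed.

Lemma psd_apply n m (Ks : seq 'M[C]_(m, n)) X : psd X -> psd (apply_channel Ks X).
Proof. by move=> PX; apply: psd_sum => K _; apply: psd_conj. Qed.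

Lemma tr_conj m n (K : 'M[C]_(m, n)) X : \tr (K *m X *m adj K) = \tr (adj K *m K *m X).
Proof. by rewrite mxtrace_mulC mulmxA. Qed.

Lemma tr_apply n m (Ks : seq 'M[C]_(m, n)) X :
  kraus_channel Ks -> \tr (apply_channel Ks X) = \tr X.
Proof.
move=> HK; rewrite /apply_channel raddf_sum /=.
under eq_bigr do rewrite tr_conj.
by rewrite -raddf_sum -mulmx_suml HK mul1mx.
Qed.

Lemma density_apply n m (Ks : seq 'M[C]_(m, n)) X :
  kraus_channel Ks -> density X -> density (apply_channel Ks X).
Proof. by move=> HK [PX TX]; split; [apply: psd_apply | rewrite tr_apply]. Qed.

Lemma psd_pure n (v : 'cV[C]_n) : psd (pure v).
Proof.
move=> u; rewrite /pure mulmxA -mulmxA.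
set w := adj u *m v.
have -> : adj v *m u = adj w by rewrite /w adj_mul adjK.
by rewrite mxE big_ord1 adjE mul_conjC_ge0.
Qed.

Lemma conjE m n (K : 'M[C]_(m, n)) X i i' :
  (K *m X *m adj K) i i' = \sum_k \sum_l K i k * X k l * (K i' l)^*.
Proof.
rewrite mxE; under eq_bigr do rewrite mxE big_distrl adjE.
rewrite exchange_big /=; apply: eq_bigr => k _; apply: eq_bigr => l _.
by [].
Qed.

Definition mono m n (f : 'I_m -> 'I_n) (c : 'I_m -> C) : 'M[C]_(m, n) :=
  \matrix_(i, k) (c i * (f i == k)%:R).

Lemma mono_act m n (f : 'I_m -> 'I_n) c X i i' :
  (mono f c *m X *m adj (mono f c)) i i' = c i * X (f i) (f i') * (c i')^*.
Proof.
rewrite conjE (bigD1 (f i)) //= [X in _ + X]big1 ?addr0; last first.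
  move=> k /negbTE kf; apply: big1 => l _; rewrite mxE (eq_sym (f i)) kf.
  by rewrite mulr0 !mul0r.
rewrite (bigD1 (f i')) //= [X in _ + X]big1 ?addr0; last first.
  by move=> l /negbTE lf; rewrite [mono f c i' l]mxE (eq_sym (f i')) lf mulr0 rmorph0 mulr0.
by rewrite !mxE !eqxx !mulr1.
Qed.

Lemma mono_gram m n (f : 'I_m -> 'I_n) c k l :
  (adj (mono f c) *m mono f c) k l =
  (k == l)%:R * \sum_(i | f i == k) ((c i)^* * c i).
Proof.
rewrite mxE (bigID (fun i => f i == k)) /= [X in _ + X]big1 ?addr0; last first.
  by move=> i /negbTE fk; rewrite adjE mxE fk mulr0 rmorph0 mul0r.
rewrite big_distrr; apply: eq_bigr => i /eqP fk.
rewrite adjE !mxE fk eqxx mulr1 /=.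
by rewrite mulrA mulrC.
Qed.

Lemma kron_mono m1 n1 m2 n2 (f : 'I_m1 -> 'I_n1) c (g : 'I_m2 -> 'I_n2) e :
  kron (mono f c) (mono g e) =
  mono (fun k => mxvec_index (f (unpair k).1) (g (unpair k).2))
       (fun k => c (unpair k).1 * e (unpair k).2).
Proof.
apply/matrixP => k l; case/mxvec_indexP: k => i j; case/mxvec_indexP: l => i' j'.
rewrite kronE !mxE !unpairK /= mxvec_index_eq.
by case: (f i == i'); case: (g j == j'); rewrite /= ?mulr1 ?mulr0 ?mul0r;
  rewrite ?mulrACA ?mulr1 ?mulr0.
Qed.


Lemma unitary_sum a (U : 'M[C]_a) i i' : adj U *m U = 1%:M ->
  \sum_s (U s i * (U s i')^*) = (i' == i)%:R.
Proof.
move=> /matrixP /(_ i' i); rewrite !mxE => <-.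
by apply: eq_bigr => s _; rewrite adjE mulrC.
Qed.

Lemma unitary_sum2 a (U : 'M[C]_a) i i1 (f x g : C) : adj U *m U = 1%:M ->
  \sum_s (U s i * f * x * (U s i1 * g)^*) = (i1 == i)%:R * (f * x * g^*).
Proof.
move=> HU; rewrite -(unitary_sum i i1 HU) big_distrl /=.
apply: eq_bigr => s _; rewrite rmorphM /=.
by ring.
Qed.

Lemma ptrace1_conj a m m' (U : 'M[C]_a) (F : 'M[C]_(m', m)) (X : 'M[C]_(a * m)) :
  adj U *m U = 1%:M ->
  ptrace1 (kron U F *m X *m adj (kron U F)) = F *m ptrace1 X *m adj F.
Proof.
move=> HU; apply/matrixP => j j'.
rewrite conjE mxE.
under eq_bigr do rewrite conjE big_pair.
under eq_bigr do under eq_bigr do under eq_bigr do rewrite big_pair.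
under eq_bigr do under eq_bigr do under eq_bigr do under eq_bigr do under eq_bigr do rewrite !kronE.
rewrite exchange_big /=; under eq_bigr do rewrite exchange_big /=.
under eq_bigr do under eq_bigr do rewrite exchange_big /=.
under eq_bigr do under eq_bigr do under eq_bigr do rewrite exchange_big /=.
under eq_bigr do under eq_bigr do under eq_bigr do under eq_bigr do rewrite unitary_sum2 //.
under eq_bigr do under eq_bigr do rewrite exchange_big /=.
under eq_bigr do under eq_bigr do under eq_bigr do rewrite sum_delta.
rewrite exchange_big /=; apply: eq_bigr => k _.
rewrite exchange_big /=; apply: eq_bigr => l _.
by rewrite mxE big_distrr big_distrl /=; apply: eq_bigr => t _.
Qed.


Lemma ptrace1_add a m (X Y : 'M[C]_(a * m)) : ptrace1 (X + Y) = ptrace1 X + ptrace1 Y.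
Proof.
by apply/matrixP => i j; rewrite !mxE -big_split; apply: eq_bigr => t _; rewrite mxE.
Qed.

Lemma ptrace1_0 a m : ptrace1 (0 : 'M[C]_(a * m)) = 0.
Proof. by apply/matrixP => i j; rewrite !mxE big1 // => t _; rewrite mxE. Qed.

Lemma ptrace1_sum a m I (r : seq I) (P : pred I) (F : I -> 'M[C]_(a * m)) :
  ptrace1 (\sum_(i <- r | P i) F i) = \sum_(i <- r | P i) ptrace1 (F i).
Proof.
elim/big_rec2: _ => [|i x y Pi <-]; first exact: ptrace1_0.
exact: ptrace1_add.
Qed.

Lemma ptrace1_scale a m c (X : 'M[C]_(a * m)) : ptrace1 (c *: X) = c *: ptrace1 X.
Proof.
apply/matrixP => i j; rewrite !mxE big_distrr; apply: eq_bigr => t _; by rewrite mxE.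
Qed.

Lemma ptrace1_kron a m (A : 'M[C]_a) (B : 'M[C]_m) : ptrace1 (kron A B) = \tr A *: B.
Proof.
apply/matrixP => i j; rewrite !mxE big_distrl; apply: eq_bigr => t _ /=.
by rewrite kronE.
Qed.

Definition slice a m (t : 'I_a) : 'M[C]_(m, a * m) :=
  mono (fun j => mxvec_index t j) (fun _ => 1).

Lemma ptrace1_slices a m (X : 'M[C]_(a * m)) :
  ptrace1 X = \sum_t (slice m t *m X *m adj (slice m t)).
Proof.
apply/matrixP => i j; rewrite !mxE summxE; apply: eq_bigr => t _.
by rewrite mono_act rmorph1 mulr1 mul1r.
Qed.

Lemma psd_ptrace1 a m (X : 'M[C]_(a * m)) : psd X -> psd (ptrace1 X).
Proof. by move=> PX; rewrite ptrace1_slices; apply: psd_sum => t _; apply: psd_conj. Qed.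

Definition embed a m (t : 'I_a) : 'M[C]_(a * m, m) :=
  mono (fun k => (unpair k).2) (fun k => ((unpair k).1 == t)%:R).

Lemma kron1_embeds a m (S : 'M[C]_m) :
  kron (1%:M : 'M_a) S = \sum_t (embed m t *m S *m adj (embed m t)).
Proof.
apply/matrixP => k l; case/mxvec_indexP: k => i j; case/mxvec_indexP: l => i' j'.
rewrite kronE summxE.
under eq_bigr do rewrite mono_act !unpairK /= rmorph_nat.
rewrite (bigD1 i) //= big1 ?addr0; last first.
  by move=> t /negbTE ti; rewrite eq_sym ti !mul0r.
rewrite eqxx mul1r mxE.
by rewrite mulrC eq_sym.
Qed.

Lemma psd_kron1 a m (S : 'M[C]_m) : psd S -> psd (kron (1%:M : 'M_a) S).
Proof. by move=> PS; rewrite kron1_embeds; apply: psd_sum => t _; apply: psd_conj. Qed.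

Lemma density_ptrace1 a m (X : 'M[C]_(a * m)) : density X -> density (ptrace1 X).
Proof.
move=> [PX TX]; split; first exact: psd_ptrace1.
rewrite -TX /mxtrace big_pair; rewrite exchange_big /=.
by apply: eq_bigr => j _; rewrite mxE.
Qed.

Section Prod.
Variables a m m' : nat.
Implicit Types UFs : seq ('M[C]_a * 'M[C]_(m', m)).

Definition prodch UFs : seq 'M[C]_(a * m', a * m) := [seq kron p.1 p.2 | p <- UFs].
Definition unitaries UFs := forall p, p \in UFs ->
  adj p.1 *m p.1 = 1%:M /\ p.1 *m adj p.1 = 1%:M.

Lemma kraus_prod UFs : unitaries UFs -> kraus_channel (map snd UFs) ->
  kraus_channel (prodch UFs).
Proof.
rewrite /kraus_channel !big_map => HU HK.
rewrite big_seq (eq_bigr (fun p => kron 1%:M (adj p.2 *m p.2))); last first.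
  by move=> p /HU [H1 _]; rewrite adj_kron kron_mul H1.
by rewrite -big_seq -kron_sumr HK kron11.
Qed.

Lemma apply_prod_kron1 UFs S : unitaries UFs ->
  apply_channel (prodch UFs) (kron 1%:M S) = kron 1%:M (apply_channel (map snd UFs) S).
Proof.
rewrite /apply_channel !big_map kron_sumr => HU.
rewrite big_seq [RHS]big_seq; apply: eq_bigr => p /HU [_ H2].
by rewrite adj_kron !kron_mul mulmx1 H2.
Qed.

Lemma ptrace1_apply_prod UFs X : unitaries UFs ->
  ptrace1 (apply_channel (prodch UFs) X) = apply_channel (map snd UFs) (ptrace1 X).
Proof.
rewrite /apply_channel !big_map ptrace1_sum => HU.
rewrite big_seq [RHS]big_seq; apply: eq_bigr => p /HU [H1 _].
exact: ptrace1_conj.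
Qed.

End Prod.


Lemma ext_le_refl (x : ext C) : ext_le x x.
Proof. by case: x => //= r. Qed.

Lemma ext_le_trans (x y z : ext C) : ext_le x y -> ext_le y z -> ext_le x z.
Proof.
case: x => [r||]; case: y => [s||]; case: z => [t||] //=.
exact: le_trans.
Qed.

Lemma ext_le_anti (x y : ext C) : ext_le x y -> ext_le y x -> x = y.
Proof.
case: x => [r||]; case: y => [s||] //= H1 H2.
by congr EFin; apply/eqP; rewrite eq_le H1 H2.
Qed.

Lemma ext_opp_le (x y : ext C) : ext_le x y -> ext_le (ext_opp y) (ext_opp x).
Proof.
by case: x => [r||]; case: y => [s||] //=; rewrite lerN2.
Qed.

Section Div.
Variables (log : C -> C) (D : divergence_family C).
Hypothesis HD : divergence log D.

Lemma Hdown_mono a m m' (UFs : seq ('M[C]_a * 'M[C]_(m', m))) X :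
  unitaries UFs -> kraus_channel (map snd UFs) -> density X ->
  ext_le (Hdown D X) (Hdown D (apply_channel (prodch UFs) X)).
Proof.
move=> HU HK DX; apply: ext_opp_le.
rewrite ptrace1_apply_prod // -apply_prod_kron1 //.
have [_ [DP _]] := HD; apply: DP; first exact: kraus_prod.
  exact: DX.
by apply: psd_kron1; apply: psd_ptrace1; case: DX.
Qed.

Lemma Hup_mono a m m' (UFs : seq ('M[C]_a * 'M[C]_(m', m))) X h :
  unitaries UFs -> kraus_channel (map snd UFs) -> density X ->
  Hup_ub D (apply_channel (prodch UFs) X) h -> Hup_ub D X h.
Proof.
move=> HU HK DX Hh sigma Ds; apply: ext_le_trans (Hh _ (density_apply HK Ds)).
apply: ext_opp_le; rewrite -apply_prod_kron1 //.
have [_ [DP _]] := HD; apply: DP; first exact: kraus_prod.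
  exact: DX.
by apply: psd_kron1; case: Ds.
Qed.

End Div.

End Basics.


Section Spec.
Variable C : numClosedFieldType.

Local Open Scope sesquilinear_scope.
Lemma tstar_adj m n (A : 'M[C]_(m, n)) : A ^t* = adj A.
Proof. by apply/matrixP => i j; rewrite !mxE. Qed.
Local Close Scope sesquilinear_scope.

Lemma spectral_herm n (H : 'M[C]_n) : adj H = H ->
  exists (Q : 'M[C]_n) (l : 'rV[C]_n),
    [/\ Q *m adj Q = 1%:M, adj Q *m Q = 1%:M & H = adj Q *m diag_mx l *m Q].
Proof.
move=> aH.
have Hn : H \is normalmx.
  by apply/normalmxP; rewrite tstar_adj aH.
have := orthomx_spectralP Hn; set Q := spectralmx H; set l := spectral_diag H => HQ.
have QU : Q \is unitarymx by apply: spectral_unitarymx.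
exists Q, l; split.
- by rewrite -tstar_adj; apply/unitarymxP.
- by rewrite -tstar_adj -invmx_unitary // mulVmx // unitarymx_unit.
- by rewrite -tstar_adj -invmx_unitary.
Qed.


Lemma diag_entry n (l : 'rV[C]_n) (A : 'M[C]_n) i j :
  (diag_mx l *m A) i j = l 0 i * A i j.
Proof. by rewrite mul_diag_mx mxE. Qed.

Lemma adj_delta m n (i : 'I_m) (j : 'I_n) :
  adj (delta_mx i j : 'M[C]_(m, n)) = delta_mx j i.
Proof. by apply/matrixP => k l; rewrite adjE !mxE rmorph_nat andbC. Qed.

Lemma sum_delta_diag n : \sum_(j < n) (delta_mx j j : 'M[C]_n) = 1%:M.
Proof.
apply/matrixP => k l; rewrite summxE !mxE (bigD1 k) //= big1 ?addr0.
  by rewrite mxE eqxx /= eq_sym.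
by move=> j /negbTE jk; rewrite mxE eq_sym jk.
Qed.

Lemma purif_link n c c0 (M : 'M[C]_(n, c)) (W : 'M[C]_(n, c0)) :
  M *m adj M = W *m adj W -> (0 < c0)%N ->
  exists (F0 : 'M[C]_(c0, c)) (Ks : seq 'M[C]_(c0, c)),
    [/\ M *m F0^T = W, (forall K, K \in Ks -> M *m K^T = 0) &
        kraus_channel (F0 :: Ks)].
Proof.
move=> HMW c0_gt0.
set H := M *m adj M.
have aH : adj H = H by rewrite /H adj_mul adjK.
have [Q [l [Q1 Q2 HQ]]] := spectral_herm aH.
set G := Q *m M; set K := Q *m W.
set L := diag_mx l.
have GG : G *m adj G = L.
  by rewrite /G adj_mul mulmxA -(mulmxA Q) -/H HQ !mulmxA Q1 mul1mx -mulmxA Q1 mulmx1.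
have KK : K *m adj K = L.
  by rewrite /K adj_mul mulmxA -(mulmxA Q) -HMW -/H HQ !mulmxA Q1 mul1mx -mulmxA Q1 mulmx1.
have lE : forall p (G : 'M[C]_(n, p)), G *m adj G = L -> forall i, l 0 i = \sum_j G i j * (G i j)^*.
  move=> p G' GG' i; have /matrixP /(_ i i) := GG'; rewrite !mxE eqxx mulr1n => <-.
  by apply: eq_bigr => j _; rewrite !mxE.
have lz : forall p (G : 'M[C]_(n, p)), G *m adj G = L -> forall i j, l 0 i = 0 -> G i j = 0.
  move=> p G' GG' i j; rewrite (lE _ _ GG') => /eqP; rewrite psumr_eq0; last first.
    by move=> k _; apply: mul_conjC_ge0.
  by move=> /allP /(_ j (mem_index_enum _)); rewrite mul_conjC_eq0 => /eqP.
have lreal : forall i, (l 0 i)^* = l 0 i.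
  move=> i; rewrite (lE _ _ GG) rmorph_sum; apply: eq_bigr => j _.
  by rewrite rmorphM /= conjCK mulrC.
set Lp := diag_mx (\row_i (l 0 i)^-1).
have LLp : forall p (G' : 'M[C]_(n, p)), G' *m adj G' = L -> L *m (Lp *m G') = G'.
  move=> p G' GG'; apply/matrixP => i j; rewrite /L /Lp !mul_diag_mx !mxE.
  case: (eqVneq (l 0 i) 0) => [l0|ln0]; first by rewrite (lz _ _ GG' i j l0) !mulr0.
  by rewrite mulrA mulfV // mul1r.
have LpLLp : Lp *m (L *m Lp) = Lp.
  apply/matrixP => i j; rewrite /L /Lp !mul_diag_mx !mxE.
  case: (eqVneq (l 0 i) 0) => [->|ln0]; first by rewrite invr0 !mul0r mul0rn.
  by rewrite mulKf.
have aLp : adj Lp = Lp.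
  apply/matrixP => i j; rewrite adjE !mxE; case: (eqVneq i j) => [->|nij].
    by rewrite !mulr1n fmorphV /= lreal.
  by rewrite !mulr0n rmorph0.
have [Mp MpE] : exists Mp, Mp = adj Q *m Lp *m Q by eexists.
have aMp : adj Mp = Mp by rewrite MpE !adj_mul adjK aLp mulmxA.
have [T TE] : exists T, T = adj M *m Mp *m W by eexists.
have MT : M *m T = W.
  rewrite TE !mulmxA -/H HQ MpE -!mulmxA (mulmxA Q (adj Q)) Q1 mul1mx -/K.
  by rewrite LLp // /K mulmxA Q2 mul1mx.
have MpHMp : Mp *m (H *m Mp) = Mp.
  rewrite HQ MpE -!mulmxA (mulmxA Q (adj Q)) Q1 mul1mx.
  by rewrite (mulmxA Q (adj Q)) Q1 mul1mx (mulmxA L Lp) (mulmxA Lp) LpLLp.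
have [P PE0] : exists P, P = T *m adj T by eexists.
have PE : P = adj M *m Mp *m M.
  rewrite PE0 TE adj_mul (adj_mul (adj M) Mp) adjK aMp -!mulmxA (mulmxA W) -HMW -/H.
  by rewrite (mulmxA H Mp) (mulmxA Mp) MpHMp mulmxA.
have MP : M *m P = M.
  rewrite PE !mulmxA -/H HQ MpE -!mulmxA (mulmxA Q (adj Q)) Q1 mul1mx -/G.
  by rewrite LLp // /G mulmxA Q2 mul1mx.
have PP : P *m P = P.
  by rewrite {1}PE -!mulmxA MP !mulmxA -PE.
have aP : adj P = P by rewrite PE0 adj_mul adjK.
have trB : forall (A B : 'M[C]_c), (A - B)^T = A^T - B^T.
  by move=> A B; apply/matrixP => i j; rewrite !mxE.
set Pi := 1%:M - P^T.
have aPi : adj Pi = Pi by rewrite /Pi adjB adj_one adj_tr aP.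
have PiPi : Pi *m Pi = Pi.
  rewrite /Pi mulmxBr mulmx1 mulmxBl mul1mx -trmx_mul PP.
  by rewrite subrr subr0.
exists T^T, [seq delta_mx (Ordinal c0_gt0) j *m Pi | j <- index_enum 'I_c].
split.
- by rewrite trmxK.
- move=> K' /mapP [j _ ->]; rewrite trmx_mul /Pi trB trmx1 trmxK mulmxA.
  by rewrite mulmxBr mulmx1 MP subrr mul0mx.
rewrite /kraus_channel big_cons big_map adj_tr -trmx_mul -PE0.
have -> : \sum_(j <- index_enum 'I_c)
    adj (delta_mx (Ordinal c0_gt0) j *m Pi) *m (delta_mx (Ordinal c0_gt0) j *m Pi) =
    \sum_j Pi *m delta_mx j j *m Pi.
  by apply: eq_bigr => j _; rewrite adj_mul aPi adj_delta -!mulmxA (mulmxA (delta_mx j _)) mul_delta_mx.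
rewrite -mulmx_suml -mulmx_sumr sum_delta_diag mulmx1 PiPi /Pi.
by rewrite addrC subrK.
Qed.

End Spec.


Section PM.
Variable C : numClosedFieldType.

Definition Vm n c (v : 'cV[C]_(n * c)) : 'M[C]_(n, c) :=
  \matrix_(k, g) v (mxvec_index k g) 0.

Lemma pureE n (v : 'cV[C]_n) i j : pure v i j = v i 0 * (v j 0)^*.
Proof. by rewrite mxE big_ord1 adjE. Qed.

Lemma ptrace2_pure n c (v : 'cV[C]_(n * c)) : ptrace2 (pure v) = Vm v *m adj (Vm v).
Proof.
apply/matrixP => i j; rewrite !mxE; apply: eq_bigr => t _.
by rewrite pureE adjE !mxE.
Qed.

Definition pm a m c (M : 'M[C]_(a * m, c)) : 'M[C]_(a * c) :=
  \matrix_(k, l) \sum_t M (mxvec_index (unpair k).1 t) (unpair k).2 *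
                        (M (mxvec_index (unpair l).1 t) (unpair l).2)^*.

Lemma pmE a m c (M : 'M[C]_(a * m, c)) x g x' g' :
  pm M (mxvec_index x g) (mxvec_index x' g') =
  \sum_t M (mxvec_index x t) g * (M (mxvec_index x' t) g')^*.
Proof. by rewrite mxE !unpairK. Qed.

Lemma ptrace_mid_pure a m c (v : 'cV[C]_((a * m) * c)) : ptrace_mid (pure v) = pm (Vm v).
Proof.
apply/matrixP => k l; rewrite !mxE; apply: eq_bigr => t _.
by rewrite pureE !mxE.
Qed.

Lemma pm_conj a m c c0 (M : 'M[C]_(a * m, c)) (F : 'M[C]_(c0, c)) :
  kron (1%:M : 'M_a) F *m pm M *m adj (kron 1%:M F) = pm (M *m F^T).
Proof.
apply/matrixP => k l; case/mxvec_indexP: k => x g; case/mxvec_indexP: l => x' g'.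
rewrite conjE pmE big_pair.
under eq_bigr do under eq_bigr do rewrite big_pair.
under eq_bigr do under eq_bigr do under eq_bigr do under eq_bigr do
  rewrite !kronE.
rewrite (eq_bigr (fun i => (x == i)%:R * \sum_i0 \sum_i1 \sum_i2
   (F g i0 * pm M (mxvec_index i i0) (mxvec_index i1 i2) * ((x' == i1)%:R * F g' i2)^* ))); last first.
  move=> i _; rewrite big_distrr; apply: eq_bigr => i0 _; rewrite big_distrr; apply: eq_bigr => i1 _.
  rewrite big_distrr; apply: eq_bigr => i2 _; rewrite /= [1%:M x i]mxE [1%:M x' i1]mxE; ring.
rewrite sum_delta'.
have E1 : forall i0 i1 i2, F g i0 * pm M (mxvec_index x i0) (mxvec_index i1 i2) *
   ((x' == i1)%:R * F g' i2)^* =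
   (x' == i1)%:R * (F g i0 * pm M (mxvec_index x i0) (mxvec_index i1 i2) * (F g' i2)^*).
  by move=> i0 i1 i2; rewrite rmorphM /= rmorph_nat; ring.
under eq_bigr do under eq_bigr do under eq_bigr do rewrite E1.
under eq_bigr do under eq_bigr do rewrite -big_distrr.
under eq_bigr do rewrite sum_delta'.
under eq_bigr do under eq_bigr do rewrite pmE big_distrr big_distrl /=.
have -> : \sum_t (M *m F^T) (mxvec_index x t) g * ((M *m F^T) (mxvec_index x' t) g')^* =
  \sum_t \sum_i \sum_i0 F g i * (M (mxvec_index x t) i * (M (mxvec_index x' t) i0)^*) *
           (F g' i0)^*.
  apply: eq_bigr => t _; rewrite !mxE rmorph_sum big_distrl; apply: eq_bigr => i _.
  rewrite big_distrr; apply: eq_bigr => i0 _; rewrite !mxE rmorphM /=; ring.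
rewrite [RHS]exchange_big /=; apply: eq_bigr => i _.
by rewrite [RHS]exchange_big /=.
Qed.


Lemma pm0 a m c : pm (0 : 'M[C]_(a * m, c)) = 0.
Proof. by apply/matrixP => k l; rewrite !mxE big1 // => t _; rewrite !mxE mul0r. Qed.

Lemma link_channel a m c c0 (M : 'M[C]_(a * m, c)) (W : 'M[C]_(a * m, c0)) :
  M *m adj M = W *m adj W -> (0 < c0)%N ->
  exists UFs : seq ('M[C]_a * 'M[C]_(c0, c)),
    [/\ unitaries UFs, kraus_channel (map snd UFs) &
        apply_channel (prodch UFs) (pm M) = pm W].
Proof.
move=> HMW c0_gt0; have [F0 [Ks [H1 H2 H3]]] := purif_link HMW c0_gt0.
exists [seq (1%:M, K) | K <- F0 :: Ks]; split.
- by move=> p /mapP [K _ ->]; rewrite /= adj_one mul1mx.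
- by rewrite -map_comp map_id.
rewrite /apply_channel /prodch -map_comp big_map big_cons /= pm_conj H1.
rewrite big_seq big1 ?addr0 // => K KK.
by rewrite /= pm_conj H2 // pm0.
Qed.

Lemma density_pm a m c (M : 'M[C]_(a * m, c)) : \tr (M *m adj M) = 1 -> density (pm M).
Proof.
move=> TM; split.
  have -> : pm M = \sum_t pure (\col_k M (mxvec_index (unpair k).1 t) (unpair k).2).
    apply/matrixP => k l; rewrite !mxE summxE; apply: eq_bigr => t _.
    by rewrite pureE !mxE.
  by apply: psd_sum => t _; apply: psd_pure.
rewrite -TM /mxtrace big_pair [RHS]big_pair; apply: eq_bigr => x _.
under eq_bigr do rewrite pmE.
under [RHS]eq_bigr do rewrite mxE.
rewrite exchange_big /=; apply: eq_bigr => t _; apply: eq_bigr => g _.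
by rewrite adjE.
Qed.

End PM.


Section Concrete.
Variable C : numClosedFieldType.
Variable d : nat.
Local Notation N := d.+1.
Local Notation I := 'I_d.+1.

Definition permU (s : I) : 'M[C]_N := mono (fun z : I => s - z) (fun _ => 1).

Lemma sub_eq (s i k : I) : (s - i == k) = (i == s - k).
Proof. exact: (can2_eq (subKr s) (subKr s)). Qed.

Lemma permU_unitary s : adj (permU s) *m permU s = 1%:M /\ permU s *m adj (permU s) = 1%:M.
Proof.
split; apply/matrixP => k l.
  rewrite mono_gram (big_pred1 (s - k)) => [|i]; last by rewrite sub_eq.
  by rewrite rmorph1 !mulr1 !mxE.
have := mono_act (fun z : I => s - z) (fun _ => 1 : C) 1%:M k l; rewrite mulmx1 => ->.
by rewrite !mxE (inj_eq (subrI s)) rmorph1 !mulr1 mul1r.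
Qed.

Definition rN : C := sqrtC (N%:R^-1).

Lemma rN_norm : rN * rN^* = N%:R^-1.
Proof.
rewrite geC0_conj; last by rewrite sqrtC_ge0 invr_ge0 ler0n.
by rewrite -expr2 sqrtCK.
Qed.

Lemma natN_neq0 : (N%:R : C) != 0.
Proof. by rewrite pnatr_eq0. Qed.


Variable b : nat.
Variable P : I -> C.
Variable sigma : I -> 'M[C]_b.

Definition psiM : 'M[C]_(N * (N * b)) :=
  (N%:R)^-1 *: \sum_(x : I) \sum_(z : I)
       P z *: kron (proj x) (kron (proj (x + z)) (sigma z)).
Definition rhoM : 'M[C]_(N * b) := \sum_(y : I) P y *: kron (proj y) (sigma y).

Lemma projE n (x i j : 'I_n) : (proj x : 'M[C]_n) i j = ((i == x) && (j == x))%:R.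
Proof. by rewrite mxE. Qed.

Lemma rhoE y be y' be' :
  rhoM (mxvec_index y be) (mxvec_index y' be') = (y == y')%:R * P y * sigma y be be'.
Proof.
rewrite summxE (bigD1 y) //= [X in _ + X]big1 ?addr0; last first.
  by move=> t /negbTE ty; rewrite mxE kronE projE eq_sym ty /= mul0r mulr0.
rewrite mxE kronE projE eqxx /= (eq_sym y').
by case: (y == y'); rewrite /= ?mul1r ?mul0r ?mulr0 // mulrC.
Qed.

Lemma psiE x y be x' y' be' :
  psiM (mxvec_index x (mxvec_index y be)) (mxvec_index x' (mxvec_index y' be')) =
  (N%:R)^-1 * ((x == x') && (y == y'))%:R * P (y - x) * sigma (y - x) be be'.
Proof.
rewrite mxE summxE (bigD1 x) //= [X in _ + X]big1 ?addr0; last first.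
  move=> t /negbTE tx; rewrite summxE big1 // => z _.
  by rewrite mxE kronE projE eq_sym tx /= mul0r mulr0.
rewrite summxE (bigD1 (y - x)) //= [X in _ + X]big1 ?addr0; last first.
  move=> z /negbTE zx; rewrite mxE kronE kronE projE projE.
  have -> : (y == x + z) = false.
    by apply/negbTE; apply: contraFN zx => /eqP ->; rewrite addrC addKr.
  by rewrite /= !mul0r !mulr0.
rewrite mxE kronE kronE !projE eqxx /= subrKC eqxx /= (eq_sym x') (eq_sym y').
case: (x == x'); case: (y == y'); rewrite /= ?mul1r ?mul0r ?mulr0 ?mulr1 //.
  by rewrite mulrA. all: by rewrite !mul0r.
Qed.

Definition gmat (s : I) : 'M[C]_(N * b, b) :=
  mono (fun k => (unpair k).2) (fun k => rN * ((unpair k).1 == s)%:R).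

Definition UFs1 : seq ('M[C]_N * 'M[C]_(b, N * b)) :=
  [seq (permU s, slice C b s) | s <- index_enum I].
Definition UFs2 : seq ('M[C]_N * 'M[C]_(N * b, b)) :=
  [seq (permU s, gmat s) | s <- index_enum I].

Lemma unitaries1 : unitaries UFs1.
Proof. by move=> p /mapP [s _ ->]; apply: permU_unitary. Qed.
Lemma unitaries2 : unitaries UFs2.
Proof. by move=> p /mapP [s _ ->]; apply: permU_unitary. Qed.

Lemma kraus1 : kraus_channel (map snd UFs1).
Proof.
rewrite /kraus_channel -map_comp big_map /=.
apply/matrixP => k l; rewrite summxE; case/mxvec_indexP: k => y be.
under eq_bigr do rewrite mono_gram.
rewrite -big_distrr /= mxE (bigD1 y) //= [X in _ + X]big1 ?addr0; last first.
  by move=> t /negbTE ty; apply: big1 => j; rewrite mxvec_index_eq ty.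
rewrite (big_pred1 be); last by move=> j; rewrite mxvec_index_eq eqxx.
by rewrite rmorph1 !mulr1.
Qed.

Lemma sum_if n (a : 'I_n) (F : 'I_n -> C) : \sum_j (if j == a then F j else 0) = F a.
Proof.
rewrite (bigD1 a) //= eqxx big1 ?addr0 // => j /negbTE ->; done.
Qed.

Lemma rN_delta (t s : I) : (rN * (t == s)%:R)^* * (rN * (t == s)%:R) = (t == s)%:R * N%:R^-1.
Proof.
by case: (t == s); rewrite ?mulr0 ?rmorph0 ?mul0r // !mulr1 mul1r mulrC rN_norm.
Qed.

Lemma kraus2 : kraus_channel (map snd UFs2).
Proof.
rewrite /kraus_channel -map_comp big_map /=.
apply/matrixP => k l; rewrite summxE.
under eq_bigr do rewrite mono_gram.
rewrite -big_distrr /= mxE; case: (k == l); rewrite ?mul0r // mul1r.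
under eq_bigr do rewrite big_mkcond big_pair /=.
under eq_bigr do under eq_bigr do under eq_bigr do rewrite unpairK /=.
under eq_bigr do under eq_bigr do rewrite sum_if rN_delta.
under eq_bigr do rewrite sum_delta.
by rewrite sumr_const card_ord -(mulr_natr (N%:R^-1 : C)) mulVf ?natN_neq0.
Qed.


Lemma sum_constN (c : C) : \sum_(t : I) (N%:R^-1 * c) = c.
Proof.
by rewrite sumr_const card_ord -mulrnAl -(mulr_natr (N%:R^-1 : C)) mulVf ?natN_neq0 ?mul1r.
Qed.

Lemma gamma1 : apply_channel (prodch UFs1) psiM = rhoM.
Proof.
apply/matrixP => k l; case/mxvec_indexP: k => y be; case/mxvec_indexP: l => y' be'.
rewrite /apply_channel big_map big_map summxE /= rhoE.
under eq_bigr do rewrite /permU /slice kron_mono mono_act !unpairK /= psiE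
  (inj_eq (subrI _)) eqxx andbT !subKr !mul1r rmorph1 !mulr1 -!mulrA.
by rewrite sum_constN !mulrA.
Qed.

Lemma gamma2 : apply_channel (prodch UFs2) rhoM = psiM.
Proof.
apply/matrixP => k l; case/mxvec_indexP: k => x kk; case/mxvec_indexP: l => x' kk'.
case/mxvec_indexP: kk => y be; case/mxvec_indexP: kk' => y' be'.
rewrite /apply_channel big_map big_map summxE /= psiE.
under eq_bigr do rewrite /permU /gmat kron_mono mono_act !unpairK /= rhoE.
rewrite (bigD1 y) //= [X in _ + X]big1 ?addr0; last first.
  by move=> i /negbTE yi; rewrite (eq_sym y) yi !(mulr0, mul0r).
rewrite eqxx (inj_eq (subrI y)) (eq_sym y').
case: (x == x'); case: (y == y'); rewrite /= ?mulr0 ?mul0r ?rmorph0 ?mulr0 ?mul0r //.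
rewrite !mul1r !mulr1 -rN_norm; ring.
Qed.


Lemma tr_ptrace1 a m (X : 'M[C]_(a * m)) : \tr (ptrace1 X) = \tr X.
Proof.
rewrite /mxtrace [RHS]big_pair exchange_big /=.
by apply: eq_bigr => j _; rewrite mxE.
Qed.

Lemma kron_proj_embed (y : I) (S : 'M[C]_b) :
  kron (proj y) S = embed C b y *m S *m adj (embed C b y).
Proof.
apply/matrixP => k l; case/mxvec_indexP: k => i j; case/mxvec_indexP: l => i' j'.
rewrite kronE mono_act !unpairK projE /= rmorph_nat.
by case: (i == y); case: (i' == y); rewrite /= ?mulr0 ?mul0r ?mul1r ?mulr1.
Qed.

Lemma tr_proj (y : I) : \tr (proj y : 'M[C]_N) = 1.
Proof.
rewrite /mxtrace (bigD1 y) //= projE eqxx big1 ?addr0 // => i /negbTE iy.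
by rewrite projE iy.
Qed.

Hypothesis P_ge0 : forall z, 0 <= P z.
Hypothesis P_sum : \sum_z P z = 1.
Hypothesis sigma_dens : forall z, density (sigma z).

Lemma density_rho : density rhoM.
Proof.
split.
  apply: psd_sum => y _; apply: psd_scale => //.
  by rewrite kron_proj_embed; apply: psd_conj; case: (sigma_dens y).
rewrite raddf_sum /= -P_sum; apply: eq_bigr => y _.
rewrite mxtraceZ -tr_ptrace1 ptrace1_kron mxtraceZ.
have [_ ->] := sigma_dens y.
by rewrite tr_proj mul1r mulr1.
Qed.

Lemma density_psi : density psiM.
Proof.
rewrite -gamma2; apply: density_apply; last exact: density_rho.
apply: kraus_prod; [exact: unitaries2 | exact: kraus2].
Qed.

End Concrete.


Section Purif.
Variable C : numClosedFieldType.
Variable d b cw : nat.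
Local Notation N := d.+1.
Local Notation I := 'I_d.+1.
Variable Wm : 'M[C]_(N * b, cw).

Definition V0 : 'M[C]_(N * (N * b), cw * N) :=
  \matrix_(k, gs) (rN C d * (((unpair (unpair k).2).1 == (unpair gs).2)%:R) *
     Wm (mxvec_index ((unpair gs).2 - (unpair k).1) (unpair (unpair k).2).2) (unpair gs).1).

Lemma V0E x y be g s :
  V0 (mxvec_index x (mxvec_index y be)) (mxvec_index g s) =
  rN C d * (y == s)%:R * Wm (mxvec_index (s - x) be) g.
Proof. by rewrite mxE !unpairK. Qed.

Lemma pmV0E x g t x' g' t' :
  pm V0 (mxvec_index x (mxvec_index g t)) (mxvec_index x' (mxvec_index g' t')) =
  N%:R^-1 * (t == t')%:R * pm Wm (mxvec_index (t - x) g) (mxvec_index (t' - x') g').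
Proof.
rewrite !pmE big_pair.
under eq_bigr do under eq_bigr do rewrite !V0E.
rewrite (bigD1 t) //= [X in _ + X]big1 ?addr0; last first.
  by move=> y /negbTE yt; apply: big1 => be _; rewrite yt mulr0 !mul0r.
rewrite big_distrr /=; apply: eq_bigr => be _.
rewrite eqxx -(rN_norm C d) !rmorphM /= rmorph_nat.
case: (eqVneq t t') => [<-|tt]; rewrite ?eqxx ?(negbTE tt) /=; ring.
Qed.


Variable P : I -> C.
Variable sigma : I -> 'M[C]_b.
Hypothesis HW : Wm *m adj Wm = rhoM P sigma.

Lemma V0_psi : V0 *m adj V0 = psiM P sigma.
Proof.
apply/matrixP => k l; case/mxvec_indexP: k => x kk; case/mxvec_indexP: l => x' kk'.
case/mxvec_indexP: kk => y be; case/mxvec_indexP: kk' => y' be'.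
rewrite psiE mxE big_pair.
under eq_bigr do under eq_bigr do rewrite adjE !V0E.
rewrite exchange_big (bigD1 y) //= [X in _ + X]big1 ?addr0; last first.
  by move=> s /negbTE ys; apply: big1 => g _; rewrite (eq_sym y) ys mulr0 !mul0r.
have := HW; move/matrixP/(_ (mxvec_index (y - x) be) (mxvec_index (y - x') be')).
rewrite rhoE mxE (inj_eq (subrI y)) => E.
rewrite (eq_bigr (fun g => N%:R^-1 * (y' == y)%:R *
   (Wm (mxvec_index (y - x) be) g * (adj Wm) g (mxvec_index (y - x') be')))); last first.
  move=> g _; rewrite eqxx -(rN_norm C d) !rmorphM /= rmorph_nat adjE; ring.
rewrite -big_distrr /= E (eq_sym y').
case: (x == x'); case: (y == y'); rewrite /= ?mulr0 ?mul0r ?mulr1 ?mul1r //; ring.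
Qed.

Definition hmat (s : I) : 'M[C]_(cw * N, cw) :=
  mono (fun k => (unpair k).1) (fun k => rN C d * ((unpair k).2 == s)%:R).
Definition slice2 (s : I) : 'M[C]_(cw, cw * N) :=
  mono (fun g => mxvec_index g s) (fun _ => 1).

Definition UFs0 : seq ('M[C]_N * 'M[C]_(cw * N, cw)) :=
  [seq (permU C s, hmat s) | s <- index_enum I].
Definition UFs0' : seq ('M[C]_N * 'M[C]_(cw, cw * N)) :=
  [seq (permU C s, slice2 s) | s <- index_enum I].

Lemma unitaries0 : unitaries UFs0.
Proof. by move=> p /mapP [s _ ->]; apply: permU_unitary. Qed.
Lemma unitaries0' : unitaries UFs0'.
Proof. by move=> p /mapP [s _ ->]; apply: permU_unitary. Qed.

Lemma gamma0 : apply_channel (prodch UFs0) (pm Wm) = pm V0.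
Proof.
apply/matrixP => k l; case/mxvec_indexP: k => x kk; case/mxvec_indexP: l => x' kk'.
case/mxvec_indexP: kk => g t; case/mxvec_indexP: kk' => g' t'.
rewrite /apply_channel big_map big_map summxE /= pmV0E.
under eq_bigr do rewrite /permU /hmat kron_mono mono_act !unpairK /=.
rewrite (bigD1 t) //= [X in _ + X]big1 ?addr0; last first.
  by move=> s /negbTE ts; rewrite (eq_sym t) ts !mulr0 !mul0r.
rewrite eqxx -(rN_norm C d) !rmorphM /= rmorph_nat rmorph1.
case: (eqVneq t t') => [<-|tt]; rewrite ?eqxx ?(negbTE tt) /=; ring.
Qed.

Lemma gamma0' : apply_channel (prodch UFs0') (pm V0) = pm Wm.
Proof.
apply/matrixP => k l; case/mxvec_indexP: k => z g; case/mxvec_indexP: l => z' g'.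
rewrite /apply_channel big_map big_map summxE /=.
under eq_bigr do rewrite /permU /slice2 kron_mono mono_act !unpairK /= pmV0E
  eqxx !subKr rmorph1 !mulr1 !mul1r.
under eq_bigr do rewrite rmorph1 mulr1.
by rewrite sum_constN.
Qed.


Lemma kraus0 : kraus_channel (map snd UFs0).
Proof.
rewrite /kraus_channel -map_comp big_map /=.
apply/matrixP => k l; rewrite summxE.
under eq_bigr do rewrite mono_gram.
rewrite -big_distrr /= mxE; case: (k == l); rewrite ?mul0r // mul1r.
under eq_bigr do rewrite big_mkcond big_pair /=.
under eq_bigr do under eq_bigr do under eq_bigr do rewrite unpairK /=.
rewrite exchange_big /= (bigD1 k) //= [X in _ + X]big1 ?addr0; last first.
  by move=> j /negbTE jk; apply: big1 => i _; apply: big1 => i0 _; rewrite jk.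
rewrite eqxx.
under eq_bigr do under eq_bigr do rewrite rN_delta.
under eq_bigr do rewrite sum_delta.
by rewrite -[RHS](sum_constN d (1 : C)); apply: eq_bigr => i _; rewrite mulr1.
Qed.

Lemma kraus0' : kraus_channel (map snd UFs0').
Proof.
rewrite /kraus_channel -map_comp big_map /=.
apply/matrixP => k l; rewrite summxE; case/mxvec_indexP: k => g t.
under eq_bigr do rewrite mono_gram.
rewrite -big_distrr /= mxE (bigD1 t) //= [X in _ + X]big1 ?addr0; last first.
  by move=> s /negbTE st; apply: big1 => j; rewrite mxvec_index_eq st andbF.
rewrite (big_pred1 g); last by move=> j; rewrite mxvec_index_eq eqxx andbT.
by rewrite rmorph1 !mulr1.
Qed.

End Purif.


Lemma pos_of_tr (C : numClosedFieldType) n c (M : 'M[C]_(n, c)) :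
  \tr (M *m adj M) = 1 -> (0 < c)%N.
Proof.
case: c M => [|c] M //.
by rewrite thinmx0 mul0mx mxtrace0 => /eqP; rewrite eq_sym oner_eq0.
Qed.

Lemma dual_core (C : numClosedFieldType) (log : C -> C) (d b : nat)
  (P : 'I_d.+1 -> C) (sigma : 'I_d.+1 -> 'M[C]_b) :
  (forall z, 0 <= P z) -> \sum_z P z = 1 ->
  (forall z, density (sigma z)) ->
  forall D : divergence_family C, divergence log D ->
  forall c c' (M1 : 'M[C]_(d.+1 * (d.+1 * b), c)) (Wm : 'M[C]_(d.+1 * b, c')),
  M1 *m adj M1 = psiM P sigma -> Wm *m adj Wm = rhoM P sigma ->
  Hdown D (pm M1) = Hdown D (pm Wm) /\
  (forall h, Hup_ub D (pm M1) h <-> Hup_ub D (pm Wm) h).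
Proof.
move=> P0 P1 Sd D HD c c' M1 Wm H1 HW.
have Dpsi := density_psi P0 P1 Sd.
have Drho := density_rho P0 P1 Sd.
have H0 := V0_psi HW.
have T1 : \tr (M1 *m adj M1) = 1 by rewrite H1; case: Dpsi.
have T0 : \tr (V0 Wm *m adj (V0 Wm)) = 1 by rewrite H0; case: Dpsi.
have T2 : \tr (Wm *m adj Wm) = 1 by rewrite HW; case: Drho.
have D1 := density_pm T1; have D0 := density_pm T0; have D2 := density_pm T2.
have [UA [HUA HKA EA]] : exists UFs : seq ('M[C]_d.+1 * 'M[C]_(c' * d.+1, c)),
    [/\ unitaries UFs, kraus_channel (map snd UFs) &
        apply_channel (prodch UFs) (pm M1) = pm (V0 Wm)].
  by apply: link_channel; [rewrite H1 H0 | apply: pos_of_tr T0].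
have [UB [HUB HKB EB]] : exists UFs : seq ('M[C]_d.+1 * 'M[C]_(c, c' * d.+1)),
    [/\ unitaries UFs, kraus_channel (map snd UFs) &
        apply_channel (prodch UFs) (pm (V0 Wm)) = pm M1].
  by apply: link_channel; [rewrite H1 H0 | apply: pos_of_tr T1].
split.
  apply: ext_le_anti.
    apply: ext_le_trans (Hdown_mono HD HUA HKA D1) _; rewrite EA.
    by have := Hdown_mono HD (unitaries0' (C:=C) (d:=d) (cw:=c')) (kraus0' C d c') D0; rewrite gamma0'.
  apply: ext_le_trans (Hdown_mono HD (unitaries0 (C:=C) (d:=d) (cw:=c')) (kraus0 C d c') D2) _.
  rewrite gamma0.
  by have := Hdown_mono HD HUB HKB D0; rewrite EB.
move=> h; split => Hh.
  apply: (Hup_mono HD (unitaries0 (C:=C) (d:=d) (cw:=c')) (kraus0 C d c') D2); rewrite gamma0.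
  by apply: (Hup_mono HD HUB HKB D0); rewrite EB.
apply: (Hup_mono HD HUA HKA D1); rewrite EA.
by apply: (Hup_mono HD (unitaries0' (C:=C) (d:=d) (cw:=c')) (kraus0' C d c') D0); rewrite gamma0'.
Qed.

Unset Implicit Arguments. Set Strict Implicit. Set Printing Implicit Defensive.

Theorem lemma2 (C : numClosedFieldType) (log : C -> C) (d b : nat)
  (P : 'I_d.+1 -> C) (sigma : 'I_d.+1 -> 'M[C]_b) :
  is_log log ->
  (forall z, 0 <= P z) -> \sum_z P z = 1 ->
  (forall z, density (sigma z)) ->
  let psi : 'M[C]_(d.+1 * (d.+1 * b)) :=
    (d.+1%:R)^-1 *: \sum_(x : 'I_d.+1) \sum_(z : 'I_d.+1)
       P z *: kron (proj x) (kron (proj (x + z)) (sigma z)) in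
  let rho : 'M[C]_(d.+1 * b) :=
    \sum_(y : 'I_d.+1) P y *: kron (proj y) (sigma y) in
  forall D : divergence_family C, divergence log D ->
  Hdown D psi = Hdown D rho /\
  (forall h, Hup_ub D psi h <-> Hup_ub D rho h) /\
  (forall c c' (v : 'cV[C]_((d.+1 * (d.+1 * b)) * c)) (w : 'cV[C]_((d.+1 * b) * c')),
     ptrace2 (pure v) = psi -> ptrace2 (pure w) = rho ->
     ext_opp (Hdown D (ptrace_mid (pure v))) = ext_opp (Hdown D (ptrace_mid (pure w)))) /\
  (forall c c' (v : 'cV[C]_((d.+1 * (d.+1 * b)) * c)) (w : 'cV[C]_((d.+1 * b) * c')),
     ptrace2 (pure v) = psi -> ptrace2 (pure w) = rho ->
     forall h, Hup_ub D (ptrace_mid (pure v)) h <-> Hup_ub D (ptrace_mid (pure w)) h).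
Proof.
move=> _ P0 P1 Sd psi rho D HD.
have Dpsi : density (psiM P sigma) := density_psi P0 P1 Sd.
have Drho : density (rhoM P sigma) := density_rho P0 P1 Sd.
have Epsi : psi = psiM P sigma by [].
have Erho : rho = rhoM P sigma by [].
split.
  apply: ext_le_anti.
    by have := Hdown_mono HD (unitaries1 (C:=C) (d:=d) (b:=b)) (kraus1 C d b) Dpsi; rewrite gamma1.
  by have := Hdown_mono HD (unitaries2 (C:=C) (d:=d) (b:=b)) (kraus2 C d b) Drho; rewrite gamma2.
split.
  move=> h; split => Hh.
    by apply: (Hup_mono HD (unitaries2 (C:=C) (d:=d) (b:=b)) (kraus2 C d b) Drho); rewrite gamma2.
  by apply: (Hup_mono HD (unitaries1 (C:=C) (d:=d) (b:=b)) (kraus1 C d b) Dpsi); rewrite gamma1.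
split.
  move=> c c' v w Hv Hw; rewrite !ptrace_mid_pure.
  rewrite ptrace2_pure in Hv; rewrite ptrace2_pure in Hw.
  by have [-> _] := @dual_core C log d b P sigma P0 P1 Sd D HD c c' _ _ Hv Hw.
move=> c c' v w Hv Hw h; rewrite !ptrace_mid_pure.
rewrite ptrace2_pure in Hv; rewrite ptrace2_pure in Hw.
by have [_ ->] := @dual_core C log d b P sigma P0 P1 Sd D HD c c' _ _ Hv Hw.
Qed.
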